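(* Let $G$ be a topological gyrogroup. Then $G^{\bullet}$ is $\sigma$-compact if and only if $G$ is $\sigma$-compact.
   Context: A gyrogroup is a set $G$ with a binary operation $\oplus$ such that: (G1) there is a unique identity $0$ with $0\oplus a=a=a\oplus 0$; (G2) each $x$ has a unique inverse $\ominus x$ with $\ominus x\oplus x=0=x\oplus(\ominus x)$; (G3) for all $x,y$ there is an automorphism $\mathrm{gyr}[x,y]$ of $(G,\oplus)$ with $x\oplus(y\oplus z)=(x\oplus y)\oplus \mathrm{gyr}[x,y](z)$ for all $z$; (G4) $\mathrm{gyr}[x\oplus y,y]=\mathrm{gyr}[x,y]$. A topological gyrogroup is a gyrogroup with a topology (all spaces are assumed $T_1$) such that $\oplus$ is jointly continuous and $x\mapsto\ominus x$ is continuous. A space is $\sigma$-compact if it is a countable union of compact subsets. Construction: let $J=[0,1)$ and let $G^{\bullet}$ be the set of all functions $f:J\to G$ for which there exist $0=a_0<a_1<\dots<a_n=1$ with $f$ constant on each $[a_k,a_{k+1})$, with pointwise operation $(f\oplus^{\bullet}g)(r)=f(r)\oplus g(r)$. For an open neighbourhood $V$ of $0$ in $G$ and $\varepsilon>0$ let $O(V,\varepsilon)=\{f\in G^{\bullet}:\mu(\{r\in J: f(r)\notin V\})<\varepsilon\}$, $\mu$ Lebesgue measure. $G^{\bullet}$ carries the topological gyrogroup topology in which the sets $f\oplus^{\bullet}O(V,\varepsilon)$ form a local base at each $f\in G^{\bullet}$. *)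

(* Defs.v *)
From HB Require Import structures.
From mathcomp Require Import all_boot all_order all_algebra.
From mathcomp Require Import all_classical all_reals all_analysis.

Set Implicit Arguments.
Unset Strict Implicit.
Unset Printing Implicit Defensive.

Import Order.TTheory GRing.Theory Num.Theory.
Local Open Scope classical_set_scope.
Local Open Scope ring_scope.

Definition groupoid_automorphism (T : Type) (op : T -> T -> T) (g : T -> T) :=
  bijective g /\ forall a b, g (op a b) = op (g a) (g b).

Definition is_gyrogroup (T : Type) (op : T -> T -> T) (e : T) (inv : T -> T) :=
  [/\
      (forall a, op e a = a /\ op a e = a),
      (forall e', (forall a, op e' a = a /\ op a e' = a) -> e' = e),
      (forall x, op (inv x) x = e /\ op x (inv x) = e),
      (forall x y, op y x = e /\ op x y = e -> y = inv x) &
      exists gyr : T -> T -> T -> T,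
        [/\ forall x y, groupoid_automorphism op (gyr x y),
            forall x y z, op x (op y z) = op (op x y) (gyr x y z) &
            forall x y, gyr (op x y) y = gyr x y]].

(** A topological gyrogroup (the standing convention: spaces are T_1). *)
Definition is_topological_gyrogroup (T : topologicalType)
    (op : T -> T -> T) (e : T) (inv : T -> T) :=
  [/\ is_gyrogroup op e inv,
      continuous (fun p : T * T => op p.1 p.2),
      continuous inv &
      accessible_space T].

Definition sigma_compact (T : topologicalType) :=
  exists K : nat -> set T, (forall n, compact (K n)) /\ \bigcup_n K n = setT.

Definition J (R : realType) := {r : R | 0 <= r < 1}.

Definition is_step (R : realType) (T : Type) (f : J R -> T) :=
  exists (n : nat) (a : nat -> R),
    [/\ a 0%N = 0, a n = 1,
        (forall k, (k < n)%N -> a k < a k.+1) &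
        (forall k, (k < n)%N -> forall r r' : J R,
            a k <= sval r < a k.+1 -> a k <= sval r' < a k.+1 -> f r = f r')].

(** The carrier of G^bullet (it depends on op and e only through its
    topology, defined below). *)
Definition gbullet (R : realType) (T : topologicalType)
  (op : T -> T -> T) (e : T) : Type := {f : J R -> T | is_step f}.

Section GBullet.
Variables (R : realType) (T : topologicalType) (op : T -> T -> T) (e : T).
Local Notation Gb := (gbullet R op e).

Definition gb_op_fun (f g : Gb) : J R -> T := fun r => op (sval f r) (sval g r).

Definition gb_O (V : set T) (eps : R) : set Gb :=
  [set g : Gb | (lebesgue_measure (sval @` [set r : J R | ~ V (sval g r)])
                   < eps%:E)%E].

Definition gb_basic (f : Gb) (V : set T) (eps : R) : set Gb :=
  [set h : Gb | exists2 g, gb_O V eps g & sval h = gb_op_fun f g].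

Definition gb_open : set_system Gb :=
  [set U | forall f, U f -> exists V : set T, exists eps : R,
      [/\ open V, V e, 0 < eps & gb_basic f V eps `<=` U]].

Lemma gb_O_mono (V V' : set T) (eps eps' : R) :
  V `<=` V' -> eps <= eps' -> gb_O V eps `<=` gb_O V' eps'.
Proof.
move=> VV' ee' g; rewrite /gb_O /= => Og.
apply: (le_lt_trans _ (lt_le_trans Og _)); last by rewrite lee_fin.
rewrite /lebesgue_measure /lebesgue_stieltjes_measure /measure_extension /=.
apply: le_outer_measure => _ [r /= nV <-]; exists r => //= /VV' ?; exact: nV.
Qed.

Local Lemma gb_openT : gb_open setT.
Proof.
move=> f _; exists setT, 1; split => //; first exact: openT.
Qed.

Local Lemma gb_openI : setI_closed gb_open.
Proof.
move=> A B oA oB f [Af Bf].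
have [V1 [e1 [oV1 V1e e1p sA]]] := oA f Af.
have [V2 [e2 [oV2 V2e e2p sB]]] := oB f Bf.
exists (V1 `&` V2), (Num.min e1 e2); split => //.
- exact: openI.
- by rewrite lt_min e1p e2p.
- move=> h [g Og hg]; split.
  + apply: sA; exists g => //; apply: gb_O_mono Og; [by move=> x [] | ].
    by rewrite ge_min lexx.
  + apply: sB; exists g => //; apply: gb_O_mono Og; [by move=> x [] | ].
    by rewrite ge_min lexx orbT.
Qed.

Local Lemma gb_open_bigU (I : Type) (F : I -> set Gb) :
  (forall i, gb_open (F i)) -> gb_open (\bigcup_i F i).
Proof.
move=> oF f [i _ Fif].
have [V [eps [oV Ve epsp sF]]] := oF i f Fif.
exists V, eps; split => // h bh; exists i => //; exact: sF.
Qed.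

HB.instance Definition _ := gen_eqMixin Gb.
HB.instance Definition _ := gen_choiceMixin Gb.
HB.instance Definition _ := isOpenTopological.Build Gb gb_openT gb_openI gb_open_bigU.

End GBullet.

(* Main.v *)
Require Import Defs.
From HB Require Import structures.
From mathcomp Require Import all_boot all_order all_algebra.
From mathcomp Require Import all_classical all_reals all_analysis.
Import Order.TTheory GRing.Theory Num.Theory.
Local Open Scope classical_set_scope.
Local Open Scope ring_scope.
Set Implicit Arguments.
Unset Strict Implicit.
Unset Printing Implicit Defensive.
Import numFieldNormedType.Exports.
Section Gyro.
Variables (T : Type) (op : T -> T -> T) (e : T) (inv : T -> T).
Hypothesis hg : is_gyrogroup op e inv.

Lemma gy_e_l a : op e a = a. Proof. by case: hg => H _ _ _ _; case: (H a). Qed.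
Lemma gy_e_r a : op a e = a. Proof. by case: hg => H _ _ _ _; case: (H a). Qed.
Lemma gy_inv_l a : op (inv a) a = e. Proof. by case: hg => _ _ H _ _; case: (H a). Qed.
Lemma gy_inv_r a : op a (inv a) = e. Proof. by case: hg => _ _ H _ _; case: (H a). Qed.

Lemma gy_invK a : inv (inv a) = a.
Proof.
case: hg => _ _ _ H _; apply/esym/H; split; [exact: gy_inv_r | exact: gy_inv_l].
Qed.

Lemma gy_cancL a b : op (inv a) (op a b) = b.
Proof.
case: hg => _ _ _ _ [gyr [Ha Hass Hloop]].
have inj : forall x y, op a x = op a y -> x = y.
  move=> x y xy.
  have := Hass (inv a) a x; rewrite xy Hass gy_inv_l !gy_e_l.
  case: (Ha (inv a) a) => [[g gK Kg] _] /(congr1 g); by rewrite !gK.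
have g0 : forall z, gyr e a z = z.
  move=> z; apply: inj; have := Hass e a z; by rewrite !gy_e_l.
by rewrite Hass gy_inv_l gy_e_l -Hloop gy_inv_l g0.
Qed.

Lemma gy_cancR a b : op a (op (inv a) b) = b.
Proof. by rewrite -{1}(gy_invK a) gy_cancL. Qed.

Lemma gy_neq a b : a <> b -> op (inv b) a <> e.
Proof.
move=> ab H; apply: ab.
by rewrite -(gy_cancR b a) H gy_e_r.
Qed.
End Gyro.
Section Meas.
Variable R : realType.
Definition MM (P : J R -> Prop) : \bar R := lebesgue_measure (sval @` [set r : J R | P r]).

Lemma MM_le (P Q : J R -> Prop) : (forall r, P r -> Q r) -> (MM P <= MM Q)%E.
Proof.
move=> PQ; rewrite /MM /lebesgue_measure /lebesgue_stieltjes_measure /measure_extension /=.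
apply: le_outer_measure => _ [r /= Pr <-]; exists r => //; exact: PQ.
Qed.

Lemma MM_U (P Q1 Q2 : J R -> Prop) : (forall r, P r -> Q1 r \/ Q2 r) ->
  (MM P <= MM Q1 + MM Q2)%E.
Proof.
move=> PQ; rewrite /MM /lebesgue_measure /lebesgue_stieltjes_measure /measure_extension /=.
apply: le_trans; last exact: outer_measureU2.
apply: le_outer_measure => _ [r /= Pr <-].
by case: (PQ r Pr) => H; [left|right]; exists r.
Qed.

Lemma MM_itv (P : J R -> Prop) (a b : R) : a <= b ->
  (forall r, P r -> a <= sval r < b) -> (MM P <= (b - a)%:E)%E.
Proof.
move=> ab Pab.
have -> : (b - a)%:E = lebesgue_measure (`[a, b[%classic : set R).
  rewrite lebesgue_measure_itv /= lte_fin.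
  by case: ltgtP ab => // ->; rewrite subrr.
rewrite /MM /lebesgue_measure /lebesgue_stieltjes_measure /measure_extension /=.
apply: le_outer_measure => _ [r /= Pr <-].
by rewrite /= in_itv /=; apply: Pab.
Qed.

Lemma MM_0 (P : J R -> Prop) : (forall r, ~ P r) -> MM P = 0%E.
Proof.
move=> nP; rewrite /MM.
have -> : sval @` [set r : J R | P r] = set0.
  by apply/seteqP; split => // x [r Pr _]; case: (nP r).
exact: measure0.
Qed.

Lemma MM_ge (P : J R -> Prop) (c d : R) : 0 <= c -> c <= d -> d <= 1 ->
  (forall r, c <= sval r < d -> P r) -> ((d - c)%:E <= MM P)%E.
Proof.
move=> c0 cd d1 HP.
have -> : (d - c)%:E = lebesgue_measure (`[c, d[%classic : set R).
  rewrite lebesgue_measure_itv /= lte_fin.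
  by case: ltgtP cd => // ->; rewrite subrr.
rewrite /MM /lebesgue_measure /lebesgue_stieltjes_measure /measure_extension /=.
apply: le_outer_measure => x /=; rewrite in_itv /= => /andP[cx xd].
have hx : 0 <= x < 1 by rewrite (le_trans c0 cx) /= (lt_le_trans xd d1).
exists (exist _ x hx) => //; apply: HP => /=; by rewrite cx xd.
Qed.

Lemma MM_full (P : J R -> Prop) : (MM P < 1%:E)%E -> exists r, ~ P r.
Proof.
move=> H; apply/not_existsP => nP.
have := @MM_ge P 0 1 (lexx _) ler01 (lexx _).
rewrite subr0 => /(_ _) H1.
have : (1%:E <= MM P)%E by apply: H1 => r _; have := nP r; apply: contra_notP.
by rewrite leNgt H.
Qed.
End Meas.

Section Steps.
Variable R : realType.

Lemma locate (n : nat) (a : nat -> R) : a 0%N = 0 -> a n = 1 ->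
  forall x, 0 <= x < 1 -> exists k, (k < n)%N /\ a k <= x < a k.+1.
Proof.
move=> a0 an x /andP[x0 x1].
suff H : forall m, (m <= n)%N -> x < a m -> exists k, (k < m)%N /\ a k <= x < a k.+1.
  by have := H n (leqnn _); rewrite an => /(_ x1) [k [kn hk]]; exists k.
elim => [|m IH] mn xm; first by move: xm; rewrite a0 ltNge x0.
case: (ltP x (a m)) => xam.
  by have [k [km hk]] := IH (ltnW mn) xam; exists k; split => //; apply: ltnW.
by exists m; rewrite xam xm.
Qed.

Definition finstep (T : Type) (f : J R -> T) := exists b : seq R,
  forall r r' : J R, (forall c, c \in b -> (c <= sval r) = (c <= sval r')) -> f r = f r'.

Lemma step_fin (T : Type) (f : J R -> T) : is_step f -> finstep f.
Proof.
case=> n [a [a0 an ainc astep]].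
exists [seq a k | k <- iota 0 n.+1] => r r' H.
have [k [kn /andP[h1 h2]]] := locate a0 an (svalP r).
have mk : forall j, (j <= n)%N -> a j \in [seq a k | k <- iota 0 n.+1].
  by move=> j jn; apply: map_f; rewrite mem_iota add0n ltnS jn.
apply: (astep k kn); first by rewrite h1 h2.
rewrite -H ?h1 /=; last exact: mk (ltnW kn).
by rewrite ltNge -H ?leNgt ?h2 //; exact: mk.
Qed.

Lemma fin_step (T : Type) (f : J R -> T) : finstep f -> is_step f.
Proof.
case=> b Hb.
set s := sort <=%O (undup [seq c <- b | (0 < c) && (c < 1)]).
have ms : forall c, c \in s -> (0 < c) && (c < 1) /\ c \in b.
  by move=> c; rewrite mem_sort mem_undup mem_filter => /andP[].
have ss : sorted <%O s by rewrite sort_lt_sorted undup_uniq.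
set L := 0 :: rcons s 1.
have sL : sorted <%O L.
  rewrite /L lt_sorted_pairwise /= -cats1 pairwise_cat /= andbT.
  apply/and3P; split.
  - rewrite all_cat; apply/andP; split; last by rewrite /= ltr01.
    by apply/allP => c /ms [/andP[]].
  - by rewrite allrel1r; apply/allP => c /ms [/andP[]].
  - by rewrite -lt_sorted_pairwise.
have sizeL : size L = (size s).+2 by rewrite /= size_rcons.
set a := fun k => nth 1 L k.
have amono : forall i j, (i < j)%N -> (j < (size s).+2)%N -> a i < a j.
  move=> i j ij jl; rewrite /a (lt_sorted_ltn_nth 1 sL) ?inE ?sizeL //.
  exact: ltn_trans ij jl.
have amono' : forall i j, (i <= j)%N -> (j < (size s).+2)%N -> a i <= a j.
  move=> i j; rewrite leq_eqVlt => /orP[/eqP -> //|ij jl].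
  exact/ltW/amono.
exists (size s).+1, a; split.
- by [].
- by rewrite /a /L /= nth_rcons ltnn eqxx.
- by move=> k kl; apply: amono.
- move=> k kl r r' /andP[r1 r2] /andP[r1' r2']; apply: Hb => c cb.
  have [c0|c0] := leP c 0.
    by rewrite (le_trans c0 (proj1 (andP (svalP r)))) (le_trans c0 (proj1 (andP (svalP r')))).
  have [c1|c1] := leP 1 c.
    rewrite !leNgt (lt_le_trans (proj2 (andP (svalP r))) c1).
    by rewrite (lt_le_trans (proj2 (andP (svalP r'))) c1).
  have cs : c \in s by rewrite mem_sort mem_undup mem_filter c0 c1 cb.
  have [j js cj] : exists2 j, (j < size s)%N & c = a j.+1.
    exists (index c s); first by rewrite index_mem.
    by rewrite /a /L /= nth_rcons index_mem cs nth_index.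
  rewrite cj; case: (leqP j.+1 k) => jk.
    have h := amono' _ _ jk (ltn_trans kl (ltnSn _)).
    by rewrite (le_trans h r1) (le_trans h r1').
  have h : a k.+1 <= a j.+1 by apply: amono' => //; rewrite ltnS; exact: ltnW.
  by rewrite !leNgt (lt_le_trans r2 h) (lt_le_trans r2' h).
Qed.

Lemma fin_map (T U : Type) (f : J R -> T) (g : T -> U) : finstep f -> finstep (fun r => g (f r)).
Proof. by case=> b Hb; exists b => r r' H; rewrite (Hb r r'). Qed.

Lemma fin_op2 (T U V : Type) (f : J R -> T) (g : J R -> U) (h : T -> U -> V) :
  finstep f -> finstep g -> finstep (fun r => h (f r) (g r)).
Proof.
case=> b Hb [b' Hb']; exists (b ++ b') => r r' H.
by rewrite (Hb r r') ?(Hb' r r') // => c cb; apply: H; rewrite mem_cat cb ?orbT.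
Qed.

Lemma fin_cst (T : Type) (x : T) : finstep (fun _ : J R => x).
Proof. by exists [::]. Qed.

Lemma fin_ovw (T : Type) (f : J R -> T) (t : R) (x : T) :
  finstep f -> finstep (fun r => if sval r < t then f r else x).
Proof.
case=> b Hb; exists (t :: b) => r r' H.
rewrite !ltNge H ?mem_head // (Hb r r') // => c cb; apply: H.
by rewrite in_cons cb orbT.
Qed.

Lemma step_range (T : Type) (f : J R -> T) : is_step f ->
  exists n (s : nat -> J R), forall r, exists k, (k < n)%N /\ f r = f (s k).
Proof.
case=> n [a [a0 an ainc astep]].
have [s Hs] : exists s : nat -> J R, forall k,
    (exists r : J R, a k <= sval r < a k.+1) -> a k <= sval (s k) < a k.+1.
  have : forall k, exists r0 : J R,
      (exists r : J R, a k <= sval r < a k.+1) -> a k <= sval r0 < a k.+1.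
    move=> k; case: (pselect (exists r : J R, a k <= sval r < a k.+1)).
      by case=> r hr; exists r.
    move=> nx; have hx : 0 <= (0:R) < 1 by rewrite lexx ltr01.
    by exists (exist _ 0 hx) => /nx.
  by move/choice => [s Hs]; exists s.
exists n, s => r.
have [k [kn hk]] := locate a0 an (svalP r).
exists k; split => //; apply: (astep k kn) => //.
by apply: Hs; exists r.
Qed.
End Steps.

Section Top.
Variables (R : realType) (G : topologicalType) (op : G -> G -> G) (e : G) (inv : G -> G).
Hypothesis hg : is_gyrogroup op e inv.
Hypothesis opc : continuous (fun p : G * G => op p.1 p.2).
Local Notation Gb := (gbullet R op e).

Definition mkGb (f : J R -> G) (h : is_step f) : Gb := exist _ f h.

Lemma gb_eq (f g : Gb) : sval f = sval g -> f = g.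
Proof.
case: f g => [f hf] [g hg'] /= fg; subst g; congr exist; exact: Prop_irrelevance.
Qed.

Lemma openGb (A : set Gb) : open A = gb_open A. Proof. by []. Qed.

Lemma prod_nbhs (X Y : topologicalType) (x : X) (y : Y) (A : set (X*Y)) :
  nbhs (x,y) A -> exists A1 A2,
  [/\ nbhs x A1, nbhs y A2 & (forall u v, A1 u -> A2 v -> A (u,v))].
Proof.
case=> [[A1 A2] /= [n1 n2] sub]; exists A1, A2; split => // u v h1 h2; exact: (sub (u,v)).
Qed.

Lemma nbhsO (X : topologicalType) (x : X) (A : set X) : nbhs x A ->
  exists V, [/\ open V, V x & V `<=` A].
Proof. by rewrite nbhsE => -[V [oV Vx] VA]; exists V. Qed.

Lemma cont2 (X : topologicalType) (f g : X -> G) :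
  continuous f -> continuous g -> continuous (fun x => op (f x) (g x)).
Proof.
move=> fc gc x; apply: (@continuous2_cvg _ _ _ _ _ _ f g op) => //.
  exact: (@opc (f x, g x)). exact: fc. exact: gc.
Qed.

Lemma ccst (X Y : topologicalType) (y : Y) : continuous (fun _ : X => y).
Proof. exact: (@cst_continuous _ _ y). Qed.
Lemma cid (X : topologicalType) : continuous (fun x : X => x).
Proof. by move=> x; exact: cvg_id. Qed.

Lemma cont_fst (X Y : topologicalType) : continuous (fun p : X * Y => p.1).
Proof. by move=> p; apply: cvg_fst. Qed.
Lemma cont_snd (X Y : topologicalType) : continuous (fun p : X * Y => p.2).
Proof. by move=> p; apply: cvg_snd. Qed.

Lemma cont_nbhs (X : topologicalType) (f : X -> G) (x : X) (V : set G) :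
  continuous f -> open V -> V (f x) -> nbhs x (f @^-1` V).
Proof.
move=> fc oV Vfx; apply: (fc x); exact: open_nbhs_nbhs.
Qed.

Lemma fin_nbhd (x0 : G) (f : J R -> G) (N : G -> set G) : is_step f ->
  (forall y, nbhs x0 (N y)) -> nbhs x0 [set z | forall r, N (f r) z].
Proof.
move=> /step_range [n [s Hs]] HN.
have : nbhs x0 [set z | forall k, (k < n)%N -> N (f (s k)) z].
  elim: n {Hs} => [|n IH].
    by apply: (filterS _ filterT) => z _ k.
  apply: (filterS _ (filterI IH (HN (f (s n))))) => z [H1 H2] k.
  rewrite ltnS leq_eqVlt => /orP[/eqP -> //|]; exact: H1.
apply: filterS => z H r; have [k [kn ->]] := Hs r; exact: H.
Qed.

Lemma basic_self (f : Gb) V eps : V e -> 0 < eps -> gb_basic f V eps f.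
Proof.
move=> Ve eps0; exists (mkGb (fin_step (fin_cst R e))).
  rewrite /gb_O /= -/(MM _) MM_0 ?lte_fin // => r /=; exact.
by apply: funext => r; rewrite /gb_op_fun /= (gy_e_r hg).
Qed.

Lemma NB (h : Gb) (V : set G) (eps : R) : open V -> V e -> 0 < eps ->
  exists V', [/\ open V', V' e &
    forall k, gb_basic h V' (eps/2) k -> gb_basic k V' (eps/2) `<=` gb_basic h V eps].
Proof.
move=> oV Ve eps0.
pose F (a : G) := fun p : G * G => op (inv a) (op (op a p.1) p.2).
have Fc : forall a, continuous (F a).
  move=> a; apply: cont2; first exact: ccst.
  apply: cont2; last exact: cont_snd.
  by apply: cont2; [exact: ccst | exact: cont_fst].
have FV : forall a, nbhs (e, e) (F a @^-1` V).
  move=> a; apply: cont_nbhs => //.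
  by rewrite /F /= !(gy_e_r hg) (gy_inv_l hg).
have N : forall a, exists A, nbhs e A /\ forall u v, A u -> A v -> V (F a (u, v)).
  move=> a; have [A1 [A2 [n1 n2 sub]]] := prod_nbhs (FV a).
  exists (A1 `&` A2); split; first exact: filterI.
  by move=> u v [] ? _ [] _ ?; apply: sub.
have [NN HNN] := choice N.
have hst : is_step (sval h) := svalP h.
have [V' [oV' V'e V'N]] := nbhsO (fin_nbhd (N:=NN) hst (fun y => (HNN y).1)).
exists V'; split => // k [g Og kg] l [g2 Og2 lg2].
have st3 : is_step (fun r => op (inv (sval h r)) (sval l r)).
  apply: fin_step; apply: fin_op2; first by apply: fin_map; apply: step_fin.
  exact: (step_fin (svalP l)).
exists (mkGb st3).
  rewrite /gb_O /= -/(MM _); apply: le_lt_trans.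
    apply: (MM_U (Q1 := fun r => ~ V' (sval g r)) (Q2 := fun r => ~ V' (sval g2 r))).
    move=> r /= nV; apply/not_andP => -[h1 h2]; apply: nV.
    rewrite lg2 /gb_op_fun kg /gb_op_fun.
    exact: ((HNN (sval h r)).2 _ _ (V'N _ h1 r) (V'N _ h2 r)).
  by rewrite [eps]splitr EFinD; apply: lteD.
by apply: funext => r; rewrite /gb_op_fun /= (gy_cancR hg).
Qed.

Lemma nbhs_basic (f : Gb) (V : set G) (eps : R) : open V -> V e -> 0 < eps ->
  nbhs f (gb_basic f V eps).
Proof.
move=> oV Ve eps0; rewrite nbhsE.
pose U := [set h : Gb | exists V1 eps1, [/\ open V1, V1 e, 0 < eps1 &
   gb_basic h V1 eps1 `<=` gb_basic f V eps]].
exists U; last first.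
  by move=> h [V1 [eps1 [oV1 V1e e1 sub]]]; apply: sub; exact: basic_self.
rewrite /open_nbhs; split; last by rewrite /U /=; exists V, eps; split.
rewrite openGb => h [V1 [eps1 [oV1 V1e e1 sub]]].
have [V' [oV' V'e HV']] := NB h oV1 V1e e1.
exists V', (eps1/2); split => //; first by rewrite divr_gt0.
move=> k kh; exists V', (eps1/2); split => //; first by rewrite divr_gt0.
exact: subset_trans (HV' k kh) sub.
Qed.

Lemma cont_crit (X : topologicalType) (phi : X -> Gb) :
  (forall x V eps, open V -> V e -> 0 < eps -> \forall y \near x,
     (MM (fun r => ~ V (op (inv (sval (phi x) r)) (sval (phi y) r))) < eps%:E)%E) ->
  continuous phi.
Proof.
move=> H x U /nbhsO [W0 [oO Ox OU]].
rewrite openGb in oO; have [V [eps [oV Ve eps0 sub]]] := oO _ Ox.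
apply: filterS (H x V eps oV Ve eps0) => y hy; apply: OU; apply: sub.
have st : is_step (fun r => op (inv (sval (phi x) r)) (sval (phi y) r)).
  apply: fin_step; apply: fin_op2; first by apply: fin_map; apply: step_fin; exact: svalP.
  exact: (step_fin (svalP (phi y))).
exists (mkGb st) => //.
by apply: funext => r; rewrite /gb_op_fun /= (gy_cancR hg).
Qed.
End Top.

Section Param.
Variables (R : realType) (G : topologicalType) (op : G -> G -> G) (e : G) (inv : G -> G).
Hypothesis hg : is_gyrogroup op e inv.
Hypothesis opc : continuous (fun p : G * G => op p.1 p.2).
Local Notation Gb := (gbullet R op e).

Fixpoint PP (n : nat) : topologicalType :=
  if n is n'.+1 then ((PP n' * R) * G)%type else G.

Fixpoint Phi (n : nat) : PP n -> J R -> G :=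
  match n return PP n -> J R -> G with
  | 0 => fun x _ => x
  | n'.+1 => fun p r => if sval r < p.1.2 then Phi p.1.1 r else p.2
  end.
Arguments Phi : clear implicits.

Lemma Phi_fin n p : finstep (Phi n p).
Proof.
elim: n p => [|n IH] p /=; first exact: fin_cst.
exact: fin_ovw.
Qed.

Definition Phi_gb n (p : PP n) : Gb := mkGb op e (fin_step (Phi_fin p)).

Lemma nbhs_prodI (X Y : topologicalType) (x : X) (y : Y) (A : set X) (B : set Y) :
  nbhs x A -> nbhs y B -> nbhs (x, y) (A `*` B).
Proof. by move=> nA nB; exists (A, B). Qed.

Lemma key_btw : forall a b c : R, a <= b -> (c < a) != (c < b) -> a <= c < b.
Proof.
move=> a b c ab; case: (ltP c a) => ca; case: (ltP c b) => cb //=.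
by move: (lt_le_trans ca ab); rewrite ltNge cb.
Qed.

Lemma MM_between (t t' : R) (P : J R -> Prop) :
  (forall r, P r -> (sval r < t) != (sval r < t')) -> (MM P <= `|t - t'|%:E)%E.
Proof.
move=> HP; case: (leP t t') => tt'.
  have -> : `|t - t'| = t' - t by rewrite distrC ger0_norm // subr_ge0.
  apply: MM_itv => // r /HP.
  exact: key_btw.
have -> : `|t - t'| = t - t' by rewrite ger0_norm // subr_ge0 ltW.
apply: MM_itv; first exact: ltW.
move=> r /HP; rewrite eq_sym; apply: key_btw; exact: ltW.
Qed.

Lemma Phi_cont n (p : PP n) (V : set G) (eps : R) : open V -> V e -> 0 < eps ->
  \forall q \near p, (MM (fun r => ~ V (op (inv (Phi n p r)) (Phi n q r))) < eps%:E)%E.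
Proof.
elim: n p V eps => [|n IH] p V eps oV Ve eps0 /=.
  have : nbhs p ((fun q => op (inv p) q) @^-1` V).
    apply: cont_nbhs => //; first by apply: (cont2 opc); [exact: ccst | exact: cid].
    by rewrite (gy_inv_l hg).
  apply: filterS => q Vq; rewrite MM_0 ?lte_fin // => r; exact.
case: p => [[p0 t] x] /=.
have e2 : 0 < eps / 2 by rewrite divr_gt0.
have N1 := IH p0 V (eps/2) oV Ve e2.
have N2 := nbhsx_ballx t (eps/2) e2.
have N3 : nbhs x ((fun q => op (inv x) q) @^-1` V).
  apply: cont_nbhs => //; first by apply: (cont2 opc); [exact: ccst | exact: cid].
  by rewrite (gy_inv_l hg).
apply: filterS (nbhs_prodI (nbhs_prodI N1 N2) N3).
case=> [[q0 t'] x'] /= [[h1 h2] h3].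
apply: le_lt_trans.
  apply: (MM_U (Q1 := fun r => ~ V (op (inv (Phi n p0 r)) (Phi n q0 r)))
               (Q2 := fun r => (sval r < t) != (sval r < t'))).
  move=> r; case: (ltP (sval r) t) => a1; case: (ltP (sval r) t') => a2 /=;
    by [left | right | right | move=> /(_ h3)].
apply: (@le_lt_trans _ _ (MM (fun r => ~ V (op (inv (Phi n p0 r)) (Phi n q0 r))) + `|t - t'|%:E)%E).
  apply: leeD2l; exact: (MM_between (fun r H => H)).
rewrite [eps]splitr EFinD; apply: lte_leD => //.
by rewrite lee_fin; move: h2; rewrite /ball /= => /ltW.
Qed.
End Param.

Section Back.
Variables (R : realType) (G : topologicalType) (op : G -> G -> G) (e : G) (inv : G -> G).
Hypothesis hg : is_gyrogroup op e inv.
Hypothesis opc : continuous (fun p : G * G => op p.1 p.2).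
Local Notation Gb := (gbullet R op e).

Lemma Phi_gb_cont n : continuous (@Phi_gb R G op e n).
Proof.
apply: (cont_crit hg) => p V eps oV Ve eps0.
exact: (Phi_cont hg opc p oV Ve eps0).
Qed.

Local Unset Implicit Arguments.
Fixpoint DD (K : nat -> set G) (i0 : nat) (s : seq nat) : set (PP R G (size s)) :=
  match s return set (PP R G (size s)) with
  | [::] => K i0
  | i :: s' => (DD K i0 s' `*` `[0, 1]%classic) `*` K i
  end.

Local Set Implicit Arguments.
Lemma DD_compact (K : nat -> set G) i0 s : (forall n, compact (K n)) -> compact (DD K i0 s).
Proof.
move=> Kc; elim: s => [|i s IH] /=; first exact: Kc.
have h1 := compact_setX IH (@segment_compact R 0 1).
exact: compact_setX h1 (Kc i).
Qed.

Lemma cover (K : nat -> set G) : \bigcup_n K n = setT -> forall f : Gb,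
  exists i0 s (p : PP R G (size s)), DD K i0 s p /\ Phi p = sval f.
Proof.
move=> Kcov f.
have Kx : forall x, exists i, K i x.
  by move=> x; have : setT x by []; rewrite -Kcov => -[i _ Ki]; exists i.
case: (svalP f) => n [a [a0 an ainc astep]].
have amono : forall i j, (i <= j)%N -> (j <= n)%N -> a i <= a j.
  move=> i j; elim: j => [|j IH]; first by rewrite leqn0 => /eqP ->.
  rewrite leq_eqVlt => /orP[/eqP -> //|]; rewrite ltnS => ij jn.
  exact: le_trans (IH ij (ltnW jn)) (ltW (ainc j jn)).
have n0 : (0 < n)%N.
  by case: n an {astep ainc amono} => // an; move: a0; rewrite an => /eqP; rewrite oner_eq0.
have H : forall m, (m < n)%N -> exists i0 s (p : PP R G (size s)), DD K i0 s p /\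
    (forall r, sval r < a m.+1 -> Phi p r = sval f r).
  elim => [|m IH] mn.
    have hx : 0 <= (0:R) < 1 by rewrite lexx ltr01.
    pose j0 : J R := exist _ 0 hx.
    have [i Ki] := Kx (sval f j0).
    exists i, [::], (sval f j0); split => // r hr /=.
    apply: (astep 0%N mn); rewrite a0 /=.
      by rewrite lexx; move: (ainc 0%N mn); rewrite a0.
    by rewrite (proj1 (andP (svalP r))) hr.
  have [i0 [s [p [Dp Hp]]]] := IH (ltnW mn).
  have hj : 0 <= a m.+1 < 1.
    rewrite -a0 amono ?(ltnW mn) //= -an.
    exact: lt_le_trans (ainc _ mn) (amono _ _ mn (leqnn _)).
  pose jm : J R := exist _ (a m.+1) hj.
  have [i Ki] := Kx (sval f jm).
  exists i0, (i :: s), ((p, a m.+1), sval f jm); split.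
    split => //; split => //=; rewrite in_itv /= (proj1 (andP hj)) /=.
    exact: ltW (proj2 (andP hj)).
  move=> r hr /=; case: ifP => h; first exact: Hp.
  apply: (astep m.+1 mn) => /=.
    by rewrite lexx; exact: ainc.
  by rewrite hr leNgt h.
have nn : (n.-1 < n)%N by rewrite prednK.
have [i0 [s [p [Dp Hp]]]] := H n.-1 nn.
exists i0, s, p; split => //; apply: funext => r; apply: Hp.
by rewrite prednK // an (proj2 (andP (svalP r))).
Qed.

Lemma backward : sigma_compact G -> sigma_compact Gb.
Proof.
case=> K [Kc Kcov].
exists (fun k => match (unpickle k : option (nat * seq nat)) with
  | Some (i0, s) => @Phi_gb R G op e (size s) @` DD K i0 s
  | None => set0 end).
split.
  move=> k; case: unpickle => [[i0 s]|]; last exact: compact0.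
  apply: continuous_compact; last exact: DD_compact.
  exact/continuous_subspaceT/Phi_gb_cont.
apply/seteqP; split => // f _.
have [i0 [s [p [Dp Hp]]]] := cover Kcov f.
exists (pickle (i0, s)) => //; rewrite pickleK.
by exists p => //; apply: gb_eq.
Qed.
End Back.

Section Fwd.
Variables (R : realType) (G : topologicalType) (op : G -> G -> G) (e : G) (inv : G -> G).
Hypothesis hg : is_gyrogroup op e inv.
Hypothesis opc : continuous (fun p : G * G => op p.1 p.2).
Hypothesis invc : continuous inv.
Hypothesis T1 : accessible_space G.
Local Notation Gb := (gbullet R op e).

Definition cst_gb (x : G) : Gb := mkGb op e (fin_step (fin_cst R x)).

Lemma interval_hit (f : Gb) (r1 : J R) : exists d : R, 0 < d /\
  forall P : J R -> Prop, (MM P < d%:E)%E -> exists r, sval f r = sval f r1 /\ ~ P r.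
Proof.
case: (svalP f) => n [a [a0 an ainc astep]].
have [k [kn /andP[ak1 ak2]]] := locate a0 an (svalP r1).
have [r0 r1'] := andP (svalP r1).
exists (Num.min (a k.+1) 1 - sval r1); split.
  by rewrite subr_gt0 lt_min ak2 r1'.
move=> P HP; apply: contrapT => nx.
have : ((Num.min (a k.+1) 1 - sval r1)%:E <= MM P)%E.
  apply: MM_ge => //; first by rewrite le_min (ltW ak2) (ltW r1').
    by rewrite ge_min lexx orbT.
  move=> r /andP[h1 h2]; apply: contrapT => nP; apply: nx; exists r; split => //.
  apply: (astep k kn); last by rewrite ak1 ak2.
  rewrite (le_trans ak1 h1) /=; apply: lt_le_trans h2 _; by rewrite ge_min lexx.
by rewrite leNgt HP.
Qed.

Lemma nonconst_sep (f : Gb) (r1 r2 : J R) : sval f r1 <> sval f r2 ->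
  exists V (eps : R), [/\ open V, V e, 0 < eps & forall x, ~ gb_basic f V eps (cst_gb x)].
Proof.
move=> ne.
set a := sval f r1; set b := sval f r2.
pose Phi2 := fun p : G * G => op (inv (op b p.2)) (op a p.1).
have Phic : continuous Phi2.
  apply: (cont2 opc).
    move=> p; apply: (continuous_comp (f := fun p : G * G => op b p.2)) => //.
      by apply: (cont2 opc); [exact: ccst | exact: cont_snd].
    exact: invc.
  by apply: (cont2 opc); [exact: ccst | exact: cont_fst].
have Phie : Phi2 (e, e) != e.
  by apply/eqP; rewrite /Phi2 /= !(gy_e_r hg); exact: (gy_neq hg).
have [W [oW WP We]] := T1 Phie.
have WPe : W (Phi2 (e, e)) by rewrite -inE.
have [A1 [A2 [n1 n2 sub]]] := prod_nbhs (cont_nbhs Phic oW WPe).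
have [V [oV Ve VA]] := nbhsO (filterI n1 n2).
have [d1 [d1p H1]] := interval_hit f r1.
have [d2 [d2p H2]] := interval_hit f r2.
exists V, (Num.min d1 d2); split => //; first by rewrite lt_min d1p d2p.
move=> x [g Og hx].
have Og1 : (MM (fun r => ~ V (sval g r)) < d1%:E)%E.
  by apply: lt_le_trans Og _; rewrite lee_fin ge_min lexx.
have Og2 : (MM (fun r => ~ V (sval g r)) < d2%:E)%E.
  by apply: lt_le_trans Og _; rewrite lee_fin ge_min lexx orbT.
have [s1 [fs1 /contrapT Vs1]] := H1 _ Og1.
have [s2 [fs2 /contrapT Vs2]] := H2 _ Og2.
have c1 : x = op a (sval g s1) by rewrite /a -fs1; exact: (congr1 (fun h => h s1) hx).
have c2 : x = op b (sval g s2) by rewrite /b -fs2; exact: (congr1 (fun h => h s2) hx).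
have := sub _ _ (proj1 (VA _ Vs1)) (proj2 (VA _ Vs2)).
rewrite /Phi2 /= -c1 -c2 (gy_inv_l hg) => We'.
by move: We; rewrite inE /= => /(_ We').
Qed.

Lemma forward : sigma_compact Gb -> sigma_compact G.
Proof.
case=> Kb [Kbc Kbcov].
exists (fun n => [set x | Kb n (cst_gb x)]); split; last first.
  apply/seteqP; split => // x _.
  have : setT (cst_gb x) by [].
  by rewrite -Kbcov => -[n _ Kn]; exists n.
move=> n F PF FK.
have [f [Kf clf]] := Kbc n (cst_gb @ F) _ FK.
have hx : 0 <= (0:R) < 1 by rewrite lexx ltr01.
pose j0 : J R := exist _ 0 hx.
have Frange : F (cst_gb @^-1` range cst_gb).
  by apply: filterS filterT => x _; exists x.
have fc : forall r, sval f r = sval f j0.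
  move=> r; apply: contrapT => ne.
  have [V [eps [oV Ve eps0 nb]]] := nonconst_sep ne.
  have [_ [[x _ <-] hb]] := clf _ _ Frange (nbhs_basic hg opc f oV Ve eps0).
  exact: nb hb.
set x := sval f j0.
have fx : f = cst_gb x by apply: gb_eq; apply: funext => r; exact: fc.
exists x; split; first by rewrite /= -fx.
move=> A B FA nB.
have [W [oW Wx WB]] := nbhsO nB.
have nV : nbhs e ((fun v => op x v) @^-1` W).
  apply: cont_nbhs => //; first by apply: (cont2 opc); [exact: ccst | exact: cid].
  by rewrite (gy_e_r hg).
have [V [oV Ve VW]] := nbhsO nV.
have FA' : F (cst_gb @^-1` (cst_gb @` A)).
  by apply: filterS FA => y Ay; exists y.
have [_ [[y Ay <-] [g Og hy]]] := clf _ _ FA' (nbhs_basic hg opc f oV Ve ltr01).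
have [r nVr] := MM_full Og.
have Vr : V (sval g r) by apply: contrapT.
exists y; split => //; apply: WB.
have := congr1 (fun h => h r) hy; rewrite /gb_op_fun /= => ->.
by rewrite fx /=; exact: VW.
Qed.
End Fwd.

Theorem mainTheorem11 (R : realType) (G : topologicalType)
    (op : G -> G -> G) (e : G) (inv : G -> G) :
  is_topological_gyrogroup op e inv ->
  (sigma_compact (gbullet R op e) <-> sigma_compact G).
Proof.
rewrite /is_topological_gyrogroup => -[hg opc invc T1].
split => H; [exact: (forward hg opc invc T1 H) | exact: (backward R hg opc H)].
Qed.
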